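(* $$\sum_{n=1}^\infty \frac{2^n H_n \binom{2n}{n}}{n\, 3^{2n}} = \frac{\pi^2}{6} - (\log 2)^2.$$
   Context: $H_n=\sum_{k=1}^n \frac{1}{k}$ denotes the $n$-th harmonic number and $\binom{2n}{n}$ the central binomial coefficient; $\log$ is the natural logarithm. *)

(* Defs.v *)
From Stdlib Require Import Reals.
From Coquelicot Require Import Coquelicot.
Open Scope R_scope.

Fixpoint harmonic (n : nat) : R :=
  match n with
  | O => 0
  | S m => harmonic m + / INR (S m)
  end.

Definition term9 (n : nat) : R :=
  2 ^ n * harmonic n * Binomial.C (2 * n) n / (INR n * 3 ^ (2 * n)).

(* Main.v *)
Require Import Defs.
From Stdlib Require Import Reals.
From Coquelicot Require Import Coquelicot.
From Stdlib Require Import Lra Lia.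
Open Scope R_scope.

Lemma const_on (f : R -> R) (a b : R) :
  (forall x, a < x < b -> is_derive f x 0) ->
  forall x y, a < x < b -> a < y < b -> f x = f y.
Proof.
  intros Hd x y Hx Hy.
  destruct (MVT_gen f x y (fun _ => 0)) as [c [Hc Heq]].
  - intros z Hz. apply Hd. 
    destruct Hz as [H1 H2].
    split.
    + apply Rle_lt_trans with (Rmin x y); [|exact H1].
      apply Rmin_glb; lra.
    + apply Rlt_le_trans with (Rmax x y); [exact H2|].
      apply Rmax_lub; lra.
  - intros z Hz. apply continuity_pt_filterlim.
    apply (ex_derive_continuous (K:=R_AbsRing) (V:=R_NormedModule)). exists 0. apply Hd.
    destruct Hz as [H1 H2]. split.
    + apply Rlt_le_trans with (Rmin x y); [|exact H1].
      apply Rmin_glb_lt; lra.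
    + apply Rle_lt_trans with (Rmax x y); [exact H2|].
      apply Rmax_lub_lt; lra.
  - lra.
Qed.

Lemma rad_ge (a : nat -> R) (r M : R) :
  (forall n, Rabs (a n * r ^ n) <= M) -> Rbar_le r (CV_radius a).
Proof.
  intros H. apply (proj1 (CV_radius_bounded a)). exists M. exact H.
Qed.

Lemma rad_le (a b : nat -> R) :
  (forall n, Rabs (b n) <= Rabs (a n)) -> Rbar_le (CV_radius a) (CV_radius b).
Proof.
  intros H. apply (proj2 (CV_radius_bounded a)).
  intros r [M HM]. apply (proj1 (CV_radius_bounded b)). exists M.
  intros n. eapply Rle_trans; [|apply (HM n)].
  rewrite !Rabs_mult. apply Rmult_le_compat_r; [apply Rabs_pos| apply H].
Qed.

Lemma in_rad (a : nat -> R) (r x : R) :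
  Rbar_le r (CV_radius a) -> Rabs x < r -> Rbar_lt (Rabs x) (CV_radius a).
Proof.
  intros H1 H2. eapply Rbar_lt_le_trans; [|exact H1]. simpl. exact H2.
Qed.

Lemma rad_one (b : nat -> R) : (forall n, Rabs (b n) <= 1) -> Rbar_le 1 (CV_radius b).
Proof.
  intros H. apply (rad_ge _ _ 1). intros n. rewrite pow1, Rmult_1_r. apply H.
Qed.

Lemma rad_q (b : nat -> R) :
  (forall n, Rabs (b n) <= INR (S n) * 4 ^ (S n)) -> Rbar_le (1/4) (CV_radius b).
Proof.
  intros H.
  eapply Rbar_le_trans; [| apply (rad_le (PS_derive (fun n => 4 ^ n)))].
  - rewrite CV_radius_derive. apply (rad_ge _ _ 1). intros n.
    rewrite <- Rpow_mult_distr. replace (4 * (1/4)) with 1 by field.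
    rewrite pow1, Rabs_R1. lra.
  - intros n. unfold PS_derive. rewrite (Rabs_right (INR (S n) * _)).
    + apply H.
    + apply Rle_ge, Rmult_le_pos; [apply pos_INR| apply pow_le; lra].
Qed.

Definition a (n : nat) : R := Binomial.C (2 * n) n.

Lemma a_rec n : INR (S n) * a (S n) = (4 * INR n + 2) * a n.
Proof.
  unfold a, Binomial.C.
  replace (2 * S n - S n)%nat with (S n) by lia.
  replace (2 * n - n)%nat with n by lia.
  replace (2 * S n)%nat with (S (S (2 * n))) by lia.
  rewrite !fact_simpl, !mult_INR.
  rewrite !S_INR, mult_INR. simpl (INR 2).
  assert (H1 := INR_fact_lt_0 (2*n)). assert (H2 := INR_fact_lt_0 n).
  assert (H3 := pos_INR n).
  field. lra.
Qed.

Lemma a_pos n : 0 < a n.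
Proof.
  unfold a, Binomial.C. apply Rdiv_lt_0_compat.
  apply INR_fact_lt_0. apply Rmult_lt_0_compat; apply INR_fact_lt_0.
Qed.

Lemma a0 : a 0 = 1.
Proof. unfold a, Binomial.C. simpl. field. Qed.

Lemma a_Sn n : a (S n) = (4 * INR n + 2) / INR (S n) * a n.
Proof.
  assert (H : 0 < INR (S n)) by (apply lt_0_INR; lia).
  apply Rmult_eq_reg_l with (INR (S n)); [|lra].
  rewrite a_rec. field. lra.
Qed.

Lemma a_le n : a n <= 4 ^ n.
Proof.
  induction n.
  - rewrite a0. simpl. lra.
  - rewrite a_Sn. rewrite <- tech_pow_Rmult.
    assert (H : 0 < INR (S n)) by (apply lt_0_INR; lia).
    rewrite S_INR in *.
    assert (Ha := a_pos n). assert (Hn := pos_INR n).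
    apply Rle_trans with (4 * a n); [|lra].
    apply Rmult_le_compat_r; [lra|].
    apply Rmult_le_reg_r with (INR n + 1); [lra|].
    unfold Rdiv. rewrite Rmult_assoc, Rinv_l; lra.
Qed.

Lemma H_S n : harmonic (S n) = harmonic n + / INR (S n).
Proof. reflexivity. Qed.

Lemma ex_scal_R (c : R) (u : nat -> R) : ex_series u -> ex_series (fun n => c * u n).
Proof. intros H. exact (ex_series_scal_l c u H). Qed.
Lemma ex_plus_R (u v : nat -> R) : ex_series u -> ex_series v -> ex_series (fun n => u n + v n).
Proof. intros H1 H2. exact (ex_series_plus u v H1 H2). Qed.

Lemma PS_lin3 (p q r s : nat -> R) (al be ga x : R) :
  (forall n, p n = al * q n + be * r n + ga * s n) ->
  ex_pseries q x -> ex_pseries r x -> ex_pseries s x ->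
  PSeries p x = al * PSeries q x + be * PSeries r x + ga * PSeries s x.
Proof.
  intros H Hq Hr Hs. apply ex_pseries_R in Hq, Hr, Hs.
  unfold PSeries.
  rewrite <- !Series_scal_l.
  rewrite <- Series_plus.
  rewrite <- Series_plus.
  - apply Series_ext. intros n. rewrite H. ring.
  - apply ex_plus_R; apply ex_scal_R; assumption.
  - apply ex_scal_R; assumption.
  - apply ex_scal_R; assumption.
  - apply ex_scal_R; assumption.
Qed.

Lemma deriv_mul (f g : R -> R) x df dg :
  is_derive f x df -> is_derive g x dg ->
  is_derive (fun t => f t * g t) x (df * g x + f x * dg).
Proof.
  intros H1 H2. apply (is_derive_mult f g x df dg H1 H2). intros; apply Rmult_comm.
Qed.

Lemma deriv_plus (f g : R -> R) x df dg :
  is_derive f x df -> is_derive g x dg ->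
  is_derive (fun t => f t + g t) x (df + dg).
Proof. intros H1 H2. apply (is_derive_plus f g x df dg H1 H2). Qed.

Lemma deriv_minus (f g : R -> R) x df dg :
  is_derive f x df -> is_derive g x dg ->
  is_derive (fun t => f t - g t) x (df - dg).
Proof. intros H1 H2. apply (is_derive_minus f g x df dg H1 H2). Qed.

Lemma deriv_scal (c : R) (f : R -> R) x df :
  is_derive f x df -> is_derive (fun t => c * f t) x (c * df).
Proof. intros H1. apply (is_derive_scal f x c df H1). Qed.

Lemma deriv_comp (f g : R -> R) x df dg :
  is_derive f (g x) df -> is_derive g x dg ->
  is_derive (fun t => f (g t)) x (df * dg).
Proof.
  intros H1 H2. rewrite Rmult_comm. apply (is_derive_comp f g x df dg H1 H2).
Qed.

Lemma deriv_eq (f : R -> R) x (d dd : R) : is_derive f x d -> @eq R d dd -> is_derive f x dd.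
Proof. intros H ->. exact H. Qed.

Lemma incr_derive (g : nat -> R) n : PS_incr_1 (PS_derive g) n = INR n * g n.
Proof.
  destruct n; simpl.
  - rewrite Rmult_0_l. reflexivity.
  - unfold PS_derive. reflexivity.
Qed.

Lemma H_nonneg n : 0 <= harmonic n.
Proof.
  induction n. simpl; lra.
  rewrite H_S.
  assert (0 < / INR (S n)) by (apply Rinv_0_lt_compat, lt_0_INR; lia). lra.
Qed.

Lemma H_le n : harmonic n <= INR n.
Proof.
  induction n. simpl; lra.
  rewrite H_S.
  assert (/ INR (S n) <= 1).
  { rewrite <- Rinv_1. apply Rinv_le_contravar. lra. rewrite S_INR. assert (H:=pos_INR n). lra. }
  set (t := / INR (S n)) in *. rewrite S_INR. lra.
Qed.

Definition g (n : nat) : R := a n * harmonic n.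
Definition f (n : nat) : R := a n * harmonic n / INR n.

Lemma f0 : f 0 = 0.
Proof. unfold f. simpl. rewrite Rmult_0_r. unfold Rdiv. ring. Qed.

Lemma quarter_bound_a n : Rabs (a n) <= INR (S n) * 4 ^ S n.
Proof.
  rewrite Rabs_right by (apply Rle_ge, Rlt_le, a_pos).
  eapply Rle_trans. apply a_le. rewrite <- tech_pow_Rmult, S_INR.
  assert (H:=pos_INR n). assert (0 <= 4^n) by (apply pow_le; lra). nra.
Qed.

Lemma quarter_bound_g n : Rabs (g n) <= INR (S n) * 4 ^ S n.
Proof.
  unfold g. rewrite Rabs_right.
  - assert (H1:=a_le n). assert (H2:=H_le n). assert (H3:=H_nonneg n). assert (H4:=a_pos n).
    rewrite <- tech_pow_Rmult, S_INR. assert (H:=pos_INR n). assert (0 <= 4^n) by (apply pow_le; lra).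
    apply Rle_trans with (4^n * INR n). apply Rmult_le_compat; lra. nra.
  - apply Rle_ge, Rmult_le_pos. apply Rlt_le, a_pos. apply H_nonneg.
Qed.

Lemma quarter_bound_as n : Rabs (a (S n)) <= INR (S n) * 4 ^ S n.
Proof.
  rewrite Rabs_right by (apply Rle_ge, Rlt_le, a_pos).
  eapply Rle_trans. apply a_le. rewrite S_INR.
  assert (H:=pos_INR n). assert (0 <= 4^S n) by (apply pow_le; lra). nra.
Qed.

Lemma quarter_bound_gs n : Rabs (g (S n)) <= INR (S n) * 4 ^ S n.
Proof.
  unfold g. rewrite Rabs_right.
  - assert (H1:=a_le (S n)). assert (H2:=H_le (S n)). assert (H3:=H_nonneg (S n)). assert (H4:=a_pos (S n)).
    assert (0 <= 4^S n) by (apply pow_le; lra). assert (H0:=pos_INR (S n)).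
    rewrite Rmult_comm. apply Rmult_le_compat; lra.
  - apply Rle_ge, Rmult_le_pos. apply Rlt_le, a_pos. apply H_nonneg.
Qed.

Lemma quarter_bound_f n : Rabs (f n) <= INR (S n) * 4 ^ S n.
Proof.
  destruct n.
  - rewrite f0, Rabs_R0. simpl. lra.
  - unfold f. rewrite Rabs_right.
    + assert (H1:=a_le (S n)). assert (H2:=H_le (S n)). assert (H3:=H_nonneg (S n)). assert (H4:=a_pos (S n)).
      assert (0 <= 4^S n) by (apply pow_le; lra). assert (H0:=pos_INR (S n)).
      assert (HS : 0 < INR (S n)) by (apply lt_0_INR; lia).
      assert (harmonic (S n) / INR (S n) <= 1).
      { apply Rmult_le_reg_r with (INR (S n)); [lra|]. unfold Rdiv. rewrite Rmult_assoc, Rinv_l; lra. }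
      replace (a (S n) * harmonic (S n) / INR (S n)) with (a (S n) * (harmonic (S n) / INR (S n))) by (unfold Rdiv; ring).
      assert (0 <= harmonic (S n) / INR (S n)) by (apply Rdiv_le_0_compat; lra).
      apply Rle_trans with (4 ^ S n * 1). apply Rmult_le_compat; lra. rewrite <- (tech_pow_Rmult 4 (S n)). assert (1 <= INR (S (S n))) by (apply (le_INR 1); lia). nra.
    + apply Rle_ge. unfold Rdiv. apply Rmult_le_pos. apply Rmult_le_pos. apply Rlt_le, a_pos. apply H_nonneg.
      apply Rlt_le, Rinv_0_lt_compat, lt_0_INR; lia.
Qed.

Lemma rq (b : nat -> R) x : (forall n, Rabs (b n) <= INR (S n) * 4 ^ S n) ->
  Rabs x < 1/4 -> Rbar_lt (Rabs x) (CV_radius b).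
Proof. intros H Hx. apply (in_rad _ (1/4)); [apply rad_q, H| exact Hx]. Qed.

Lemma rqd (b : nat -> R) x : (forall n, Rabs (b n) <= INR (S n) * 4 ^ S n) ->
  Rabs x < 1/4 -> Rbar_lt (Rabs x) (CV_radius (PS_derive b)).
Proof. intros H Hx. rewrite CV_radius_derive. apply rq; assumption. Qed.

Lemma rqi (b : nat -> R) x : (forall n, Rabs (b n) <= INR (S n) * 4 ^ S n) ->
  Rabs x < 1/4 -> Rbar_lt (Rabs x) (CV_radius (PS_incr_1 (PS_derive b))).
Proof. intros H Hx. rewrite CV_radius_incr_1. apply rqd; assumption. Qed.

Lemma B_ode x : Rabs x < 1/4 ->
  PSeries (PS_derive a) x = 4 * x * PSeries (PS_derive a) x + 2 * PSeries a x.
Proof.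
  intros Hx.
  rewrite (PS_lin3 (PS_derive a) (PS_incr_1 (PS_derive a)) a a 4 2 0 x) at 1.
  - rewrite PSeries_incr_1. ring.
  - intros n. rewrite incr_derive. unfold PS_derive.
    rewrite a_rec. ring.
  - apply CV_radius_inside, rqi; [apply quarter_bound_a|exact Hx].
  - apply CV_radius_inside, rq; [apply quarter_bound_a|exact Hx].
  - apply CV_radius_inside, rq; [apply quarter_bound_a|exact Hx].
Qed.

Lemma B_closed x : Rabs x < 1/4 -> PSeries a x * sqrt (1 - 4 * x) = 1.
Proof.
  intros Hx.
  set (h := fun t => PSeries a t * sqrt (1 - 4 * t)).
  change (h x = 1).
  assert (Hd : forall t, -1/4 < t < 1/4 -> is_derive h t 0).
  { intros t Ht. assert (Htt : Rabs t < 1/4) by (apply Rabs_def1; lra).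
    eapply deriv_eq. unfold h. apply deriv_mul.
    - apply is_derive_PSeries. apply rq; [apply quarter_bound_a|exact Htt].
    - apply (is_derive_sqrt (fun t => 1 - 4 * t) t (-4)). auto_derive; auto; ring. lra.
    - assert (Hs : 0 < sqrt (1 - 4 * t)) by (apply sqrt_lt_R0; lra).
      assert (Hss := sqrt_sqrt (1 - 4 * t) ltac:(lra)).
      assert (Ho := B_ode t Htt).
      set (s := sqrt (1 - 4 * t)) in *.
      set (B := PSeries a t) in *. set (B' := PSeries (PS_derive a) t) in *.
      replace (B' * s + B * (-4 / (2 * s))) with ((B' * (s*s) - 2*B)/s) by (field; lra).
      rewrite Hss. replace (B' * (1 - 4 * t) - 2 * B) with 0 by lra. unfold Rdiv; rewrite Rmult_0_l; reflexivity. }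
  rewrite (const_on h (-1/4) (1/4) Hd x 0).
  - unfold h. rewrite PSeries_0, a0. replace (1 - 4 * 0) with 1 by ring. rewrite sqrt_1. ring.
  - apply Rabs_def2 in Hx. lra.
  - lra.
Qed.

Lemma G_ode x : Rabs x < 1/4 ->
  PSeries (PS_derive g) x = 4 * x * PSeries (PS_derive g) x + 2 * PSeries g x
     + PSeries (PS_decr_1 a) x.
Proof.
  intros Hx.
  rewrite (PS_lin3 (PS_derive g) (PS_incr_1 (PS_derive g)) g (PS_decr_1 a) 4 2 1 x) at 1.
  - rewrite PSeries_incr_1. ring.
  - intros n. rewrite incr_derive. unfold PS_derive, PS_decr_1, g.
    rewrite H_S.
    assert (HS : 0 < INR (S n)) by (apply lt_0_INR; lia).
    replace (INR (S n) * (a (S n) * (harmonic n + / INR (S n)))) with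
      ((INR (S n) * a (S n)) * harmonic n + a (S n)) by (field; lra).
    rewrite a_rec. ring.
  - apply CV_radius_inside, rqi; [apply quarter_bound_g|exact Hx].
  - apply CV_radius_inside, rq; [apply quarter_bound_g|exact Hx].
  - apply CV_radius_inside, rq; [apply quarter_bound_as|exact Hx].
Qed.

Definition X (u : R) : R := u / (1 + u) ^ 2.

Lemma X_range u : -1/10 < u < 1 -> Rabs (X u) < 1/4.
Proof.
  intros Hu. unfold X. assert (Hp : 0 < (1 + u) ^ 2) by (apply pow_lt; lra).
  apply Rabs_def1.
  - apply Rmult_lt_reg_r with ((1+u)^2); [lra|]. unfold Rdiv. rewrite Rmult_assoc, Rinv_l by lra. nra.
  - apply Rmult_lt_reg_r with ((1+u)^2); [lra|]. unfold Rdiv. rewrite Rmult_assoc, Rinv_l by lra. nra.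
Qed.

Lemma X_deriv u : -1/10 < u < 1 -> is_derive X u ((1 - u) / (1 + u) ^ 3).
Proof.
  intros Hu. unfold X. auto_derive.
  - apply Rgt_not_eq. nra.
  - field. lra.
Qed.

Lemma B_X u : -1/10 < u < 1 -> PSeries a (X u) = (1 + u) / (1 - u).
Proof.
  intros Hu. assert (H := B_closed (X u) (X_range u Hu)).
  assert (Hs : sqrt (1 - 4 * X u) = (1 - u) / (1 + u)).
  { replace (1 - 4 * X u) with (((1 - u) / (1 + u)) ^ 2).
    - apply sqrt_pow2. apply Rlt_le, Rdiv_lt_0_compat; lra.
    - unfold X. field. lra. }
  rewrite Hs in H.
  apply Rmult_eq_reg_r with ((1 - u) / (1 + u)).
  - rewrite H. field. lra.
  - apply Rgt_not_eq, Rdiv_lt_0_compat; lra.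
Qed.

Lemma a1 : a 1 = 2.
Proof. rewrite a_Sn, a0. simpl. field. Qed.

Lemma Bt_X u : -1/10 < u < 1 -> PSeries (PS_decr_1 a) (X u) = 2 * (1 + u) ^ 2 / (1 - u).
Proof.
  intros Hu.
  destruct (Req_dec u 0) as [->|Hu0].
  - unfold X. replace (0 / (1 + 0) ^ 2) with 0 by (field). rewrite PSeries_0.
    unfold PS_decr_1. rewrite a1. field.
  - assert (H := B_X u Hu).
    rewrite PSeries_decr_1 in H.
    + rewrite a0 in H. unfold X in *.
      apply Rmult_eq_reg_l with (u / (1 + u) ^ 2).
      * replace (u / (1 + u) ^ 2 * (2 * (1 + u) ^ 2 / (1 - u))) with ((1+u)/(1-u) - 1) by (field; lra).
        rewrite <- H. ring.
      * unfold Rdiv. apply Rmult_integral_contrapositive. split; [exact Hu0|].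
        apply Rinv_neq_0_compat. apply pow_nonzero. lra.
    + apply CV_radius_inside, rq; [apply quarter_bound_a| apply X_range; exact Hu].
Qed.

Definition lam (n : nat) : R := match n with 0%nat => 0 | S m => / INR (S m) end.
Definition l (n : nat) : R := match n with 0%nat => 0 | S m => / (INR (S m)) ^ 2 end.
Definition Lt (n : nat) : R := / INR (S n).

Lemma inv_le_one y : 1 <= y -> / y <= 1.
Proof. intros H. rewrite <- Rinv_1. apply Rinv_le_contravar; lra. Qed.

Lemma inv_le1 n : Rabs (/ INR (S n)) <= 1.
Proof.
  assert (H : 1 <= INR (S n)) by (apply (le_INR 1); lia).
  rewrite Rabs_right.
  - apply inv_le_one; lra.
  - apply Rle_ge, Rlt_le, Rinv_0_lt_compat. lra.
Qed.

Lemma lam_b n : Rabs (lam n) <= 1.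
Proof. destruct n; simpl lam. rewrite Rabs_R0; lra. apply inv_le1. Qed.

Lemma l_b n : Rabs (l n) <= 1.
Proof.
  destruct n. unfold l; rewrite Rabs_R0; lra.
  change (l (S n)) with (/ INR (S n) ^ 2).
  assert (H : 1 <= INR (S n)) by (apply (le_INR 1); lia).
  replace (INR (S n) ^ 2) with (INR (S n) * INR (S n)) by ring.
  rewrite Rabs_right.
  - apply inv_le_one. nra.
  - apply Rle_ge, Rlt_le, Rinv_0_lt_compat. nra.
Qed.

Lemma Lt_b n : Rabs (Lt n) <= 1.
Proof. apply inv_le1. Qed.

Lemma r1 (b : nat -> R) x : (forall n, Rabs (b n) <= 1) -> Rabs x < 1 -> Rbar_lt (Rabs x) (CV_radius b).
Proof. intros H Hx. apply (in_rad _ 1); [apply rad_one, H| exact Hx]. Qed.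

Lemma l_derive n : PS_derive l n = Lt n.
Proof.
  unfold PS_derive, Lt. change (l (S n)) with (/ INR (S n) ^ 2). assert (H : 0 < INR (S n)) by (apply lt_0_INR; lia). field. lra.
Qed.

Lemma lam_derive n : PS_derive lam n = 1.
Proof.
  unfold PS_derive. change (lam (S n)) with (/ INR (S n)). assert (H : 0 < INR (S n)) by (apply lt_0_INR; lia). field. lra.
Qed.

Lemma geom_PS u : Rabs u < 1 -> PSeries (fun _ => 1) u = / (1 - u).
Proof.
  intros Hu. apply is_series_unique. apply is_series_ext with (fun n => u ^ n).
  - intros n. rewrite Rmult_1_l. reflexivity.
  - apply is_series_geom. exact Hu.
Qed.

Lemma lam_ln u : Rabs u < 1 -> PSeries lam u = - ln (1 - u).
Proof.
  intros Hu.
  set (h := fun t => PSeries lam t + ln (1 - t)).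
  assert (Hd : forall t, -1 < t < 1 -> is_derive h t 0).
  { intros t Ht. assert (Htt : Rabs t < 1) by (apply Rabs_def1; lra).
    eapply deriv_eq. unfold h. apply (deriv_plus (PSeries lam) (fun t => ln (1 - t))).
    - apply is_derive_PSeries. apply r1; [apply lam_b|exact Htt].
    - apply (deriv_comp ln (fun t => 1 - t) t (/ (1 - t)) (-1)).
      + apply is_derive_ln. lra.
      + auto_derive; auto; ring.
    - simpl. rewrite (PSeries_ext _ (fun _ => 1)) by apply lam_derive.
      rewrite geom_PS by exact Htt. field. lra. }
  apply Rabs_def2 in Hu.
  assert (E := const_on h (-1) 1 Hd u 0 ltac:(lra) ltac:(lra)).
  unfold h in E. rewrite PSeries_0 in E. simpl lam in E.
  replace (1 - 0) with 1 in E by ring. rewrite ln_1 in E. lra.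
Qed.

Lemma Lt_lam u : u * PSeries Lt u = PSeries lam u.
Proof.
  rewrite <- PSeries_incr_1. apply PSeries_ext. intros [|n]; reflexivity.
Qed.

Lemma G_X u : -1/10 < u < 1 -> PSeries g (X u) = 2 * PSeries lam u * (1 + u) / (1 - u).
Proof.
  intros Hu.
  set (h := fun t => PSeries g (X t) * ((1 - t) / (1 + t)) - 2 * PSeries lam t).
  assert (Hd : forall t, -1/10 < t < 1 -> is_derive h t 0).
  { intros t Ht. assert (Htt : Rabs t < 1) by (apply Rabs_def1; lra).
    assert (HX := X_range t Ht).
    eapply deriv_eq. unfold h.
    apply (deriv_minus (fun t => PSeries g (X t) * ((1 - t) / (1 + t))) (fun t => 2 * PSeries lam t)).
    - apply deriv_mul.
      + apply deriv_comp. apply is_derive_PSeries. apply rq; [apply quarter_bound_g|exact HX].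
        apply X_deriv; exact Ht.
      + auto_derive. lra. reflexivity.
    - apply (deriv_scal 2 (PSeries lam)). apply is_derive_PSeries. apply r1; [apply lam_b|exact Htt].
    - simpl. rewrite (PSeries_ext (PS_derive lam) (fun _ => 1)) by apply lam_derive.
      rewrite geom_PS by exact Htt.
      assert (Ho := G_ode (X t) HX). rewrite (Bt_X t Ht) in Ho.
      set (D := PSeries (PS_derive g) (X t)) in *. set (Gv := PSeries g (X t)) in *.
      unfold X in Ho.
      assert (E : D * (1 - t) ^ 2 = (2 * Gv + 2 * (1 + t) ^ 2 / (1 - t)) * (1 + t) ^ 2).
      { assert (Hp : (1 + t) ^ 2 <> 0) by (apply pow_nonzero; lra).
        replace (D * (1 - t) ^ 2) with ((D - 4 * (t / (1 + t) ^ 2) * D) * (1 + t) ^ 2) by (field; lra).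
        rewrite Ho at 1. ring. }
      match goal with |- ?L = 0 => replace L with ((D * (1 - t) ^ 2 - 2 * Gv * (1 + t) ^ 2) / (1 + t) ^ 4 - 2 / (1 - t)) by (field; lra) end.
      rewrite E. field. lra. }
  assert (E := const_on h (-1/10) 1 Hd u 0 ltac:(lra) ltac:(lra)).
  unfold h in E.
  replace (X 0) with 0 in E by (unfold X; field).
  rewrite !PSeries_0 in E.
  assert (Hg0 : g 0 = 0) by (unfold g; simpl; ring).
  rewrite Hg0 in E. change (lam 0) with 0 in E.
  replace (PSeries g (X u)) with (2 * PSeries lam u * (1 + u) / (1 - u) + 
     (PSeries g (X u) * ((1 - u) / (1 + u)) - 2 * PSeries lam u) * (1 + u) / (1 - u)) by (field; lra).
  rewrite E. field. lra.
Qed.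

Lemma f_derive n : PS_derive f n = PS_decr_1 g n.
Proof.
  unfold PS_derive, PS_decr_1, f, g. assert (H : 0 < INR (S n)) by (apply lt_0_INR; lia).
  field. lra.
Qed.

Lemma g0 : g 0 = 0.
Proof. unfold g; simpl; ring. Qed.

Lemma F_X u : -1/10 < u < 1 -> PSeries f (X u) = 2 * PSeries l u.
Proof.
  intros Hu.
  set (h := fun t => PSeries f (X t) - 2 * PSeries l t).
  assert (Hd : forall t, -1/10 < t < 1 -> is_derive h t 0).
  { intros t Ht. assert (Htt : Rabs t < 1) by (apply Rabs_def1; lra).
    assert (HX := X_range t Ht).
    eapply deriv_eq. unfold h.
    apply (deriv_minus (fun t => PSeries f (X t)) (fun t => 2 * PSeries l t)).
    - apply deriv_comp. apply is_derive_PSeries. apply rq; [apply quarter_bound_f|exact HX].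
      apply X_deriv; exact Ht.
    - apply (deriv_scal 2 (PSeries l)). apply is_derive_PSeries. apply r1; [apply l_b|exact Htt].
    - rewrite (PSeries_ext (PS_derive f) (PS_decr_1 g)) by apply f_derive.
      rewrite (PSeries_ext (PS_derive l) Lt) by apply l_derive.
      destruct (Req_dec t 0) as [->|Ht0].
      + replace (X 0) with 0 by (unfold X; field).
        rewrite !PSeries_0. unfold PS_decr_1, g, Lt. rewrite a1. simpl harmonic. simpl INR. field.
      + assert (E1 := G_X t Ht). rewrite (PSeries_decr_1_aux g (X t) g0) in E1.
        assert (E2 := Lt_lam t).
        set (Gt := PSeries (PS_decr_1 g) (X t)) in *.
        set (Lv := PSeries Lt t) in *. set (La := PSeries lam t) in *.
        unfold X in E1.
        apply Rmult_eq_reg_l with t; [|exact Ht0].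
        replace (t * (Gt * ((1 - t) / (1 + t) ^ 3) - 2 * Lv)) with
          ((t / (1 + t) ^ 2 * Gt) * (1 - t) / (1 + t) - 2 * (t * Lv)) by (field; lra).
        rewrite E1, E2. field. lra. }
  assert (E := const_on h (-1/10) 1 Hd u 0 ltac:(lra) ltac:(lra)).
  unfold h in E.
  replace (X 0) with 0 in E by (unfold X; field).
  rewrite !PSeries_0 in E. rewrite f0 in E. change (l 0) with 0 in E.
  lra.
Qed.

Lemma F_29 : PSeries f (2/9) = 2 * PSeries l (1/2).
Proof.
  replace (2/9) with (X (1/2)) by (unfold X; field).
  apply F_X. lra.
Qed.

Lemma term9_f n : @eq R (f n * (2/9)^n) (term9 n).
Proof.
  destruct n as [|m].
  - unfold term9. rewrite f0. simpl harmonic. unfold Rdiv. ring.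
  - unfold term9, f, a.
    assert (HS : 0 < INR (S m)) by (apply lt_0_INR; lia).
    rewrite pow_mult. replace (3 ^ 2) with 9 by ring.
    replace (2 / 9) with (2 * / 9) by reflexivity. rewrite Rpow_mult_distr, pow_inv.
    assert (H9 : 9 ^ S m <> 0) by (apply pow_nonzero; lra).
    field. split; lra.
Qed.

Lemma sum_main : is_series (fun m : nat => term9 (S m)) (2 * PSeries l (1/2)).
Proof.
  rewrite <- F_29.
  apply is_series_incr_1.
  assert (Hr : Rbar_lt (Rabs (2/9)) (CV_radius f)).
  { apply rq. apply quarter_bound_f. rewrite Rabs_right; lra. }
  assert (H := PSeries_correct f (2/9) (CV_radius_inside f _ Hr)).
  apply is_pseries_R in H.
  match goal with |- is_series _ ?L => replace L with (PSeries f (2/9)) end.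
  - apply is_series_ext with (fun n => f n * (2/9)^n); [|exact H].
    intros n. apply term9_f.
  - unfold term9. simpl harmonic. symmetry. unfold Rdiv. rewrite Rmult_0_r, !Rmult_0_l. exact (plus_zero_r (PSeries f (2 * / 9))).
Qed.

Lemma Series_zero : Series (fun _ => 0) = 0.
Proof.
  rewrite (Series_ext _ (fun n => 0 * 0)) by (intros; ring).
  rewrite Series_scal_l. ring.
Qed.

Lemma Series_nonneg (u : nat -> R) : (forall n, 0 <= u n) -> 0 <= Series u.
Proof.
  intros H. destruct (Classical_Prop.classic (ex_series u)) as [He|Hn].
  - rewrite <- Series_zero. apply Series_le; [intros n; split; [lra| apply H]| exact He].
  - unfold Series. 
    destruct (ex_lim_seq_incr (sum_n u)) as [l Hl].
    { intros n. rewrite sum_Sn. unfold plus; simpl. assert (H1 := H (S n)). lra. }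
    rewrite (is_lim_seq_unique _ _ Hl).
    destruct l as [l| |]; simpl; try lra.
    + apply (is_lim_seq_le (fun _ => 0) (sum_n u) 0 l); [|apply is_lim_seq_const|exact Hl].
      intros n. induction n. rewrite sum_O. apply H. rewrite sum_Sn. unfold plus; simpl. assert (H1 := H (S n)). lra.
Qed.

Lemma l_nonneg n : 0 <= l n.
Proof.
  destruct n. unfold l; lra. change (l (S n)) with (/ INR (S n) ^ 2).
  apply Rlt_le, Rinv_0_lt_compat, pow_lt, lt_0_INR; lia.
Qed.

Lemma L_deriv z : Rabs z < 1 -> is_derive (PSeries l) z (PSeries Lt z).
Proof.
  intros H. rewrite <- (PSeries_ext _ _ z l_derive). apply is_derive_PSeries. apply r1; [apply l_b| exact H].
Qed.

Lemma Lt_ln z : 0 < z < 1 -> PSeries Lt z = - ln (1 - z) / z.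
Proof.
  intros Hz. rewrite <- lam_ln by (apply Rabs_def1; lra). rewrite <- Lt_lam. field. lra.
Qed.

Lemma refl_const z : 0 < z < 1 ->
  PSeries l z + PSeries l (1 - z) + ln z * ln (1 - z) = 2 * PSeries l (1/2) + ln 2 ^ 2.
Proof.
  intros Hz.
  set (h := fun t => PSeries l t + PSeries l (1 - t) + ln t * ln (1 - t)).
  assert (Hd : forall t, 0 < t < 1 -> is_derive h t 0).
  { intros t Ht. eapply deriv_eq. unfold h.
    apply deriv_plus. apply deriv_plus.
    - apply L_deriv. apply Rabs_def1; lra.
    - apply (deriv_comp (PSeries l) (fun t => 1 - t)). apply L_deriv. apply Rabs_def1; lra.
      auto_derive; auto. 
    - apply deriv_mul. apply is_derive_ln; lra.
      apply (deriv_comp ln (fun t => 1 - t)). apply is_derive_ln; lra. auto_derive; auto.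
    - rewrite Lt_ln by lra. rewrite Lt_ln by lra.
      replace (1 - (1 - t)) with t by ring. field. lra. }
  assert (E := const_on h 0 1 Hd z (1/2) Hz ltac:(lra)).
  unfold h in E. rewrite E.
  replace (1 - 1/2) with (/ 2) by field. replace (1/2) with (/2) by field.
  rewrite ln_Rinv by lra. ring.
Qed.

Lemma L_small z : 0 <= z <= 1/2 -> 0 <= PSeries l z <= 2 * z.
Proof.
  intros Hz. split.
  - apply Series_nonneg. intros n. apply Rmult_le_pos. apply l_nonneg. apply pow_le; lra.
  - rewrite (PSeries_decr_1_aux l z) by reflexivity.
    assert (Hz1 : Rabs z < 1) by (apply Rabs_def1; lra).
    assert (H1 : PSeries (PS_decr_1 l) z <= / (1 - z)).
    { rewrite <- geom_PS by exact Hz1. unfold PSeries. apply Series_le.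
      - intros n. unfold PS_decr_1. split.
        + apply Rmult_le_pos. apply l_nonneg. apply pow_le; lra.
        + rewrite Rmult_1_l. rewrite <- (Rmult_1_l (z ^ n)) at 2. apply Rmult_le_compat_r. apply pow_le; lra.
          assert (H := l_b (S n)). rewrite Rabs_right in H; [lra|]. apply Rle_ge, l_nonneg.
      - apply (ex_series_ext (fun n => z ^ n)). intros n; symmetry; apply Rmult_1_l. apply ex_series_geom. exact Hz1. }
    assert (H2 : / (1 - z) <= 2).
    { apply Rmult_le_reg_r with (1 - z). lra. rewrite Rinv_l; lra. }
    assert (H3 : 0 <= PSeries (PS_decr_1 l) z).
    { apply Series_nonneg. intros n. apply Rmult_le_pos. apply l_nonneg. apply pow_le; lra. }
    nra.
Qed.

Lemma L_le_Z (Z : R) w : is_series l Z -> 0 <= w <= 1 -> PSeries l w <= Z.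
Proof.
  intros HZ Hw. rewrite <- (is_series_unique _ _ HZ). unfold PSeries. apply Series_le.
  - intros n. split. apply Rmult_le_pos. apply l_nonneg. apply pow_le; lra.
    rewrite <- (Rmult_1_r (l n)) at 2. apply Rmult_le_compat_l. apply l_nonneg.
    rewrite <- (pow1 n). apply pow_incr. lra.
  - eexists; exact HZ.
Qed.

Lemma L_ge_partial (Z : R) w N : is_series l Z -> 0 <= w <= 1 ->
  w ^ N * sum_f_R0 l N <= PSeries l w.
Proof.
  intros HZ Hw. unfold PSeries.
  assert (Hex : ex_series (fun k => l k * w ^ k)).
  { apply (ex_series_le (fun k => l k * w ^ k) l).
    - intros n. unfold norm; simpl. rewrite Rabs_right.
      rewrite <- (Rmult_1_r (l n)) at 2. apply Rmult_le_compat_l. apply l_nonneg.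
      rewrite <- (pow1 n). apply pow_incr. lra.
      apply Rle_ge, Rmult_le_pos. apply l_nonneg. apply pow_le; lra.
    - eexists; exact HZ. }
  rewrite (Series_incr_n _ (S N)) by (lia || exact Hex).
  simpl pred.
  assert (T : 0 <= Series (fun k => l (S N + k)%nat * w ^ (S N + k))).
  { apply Series_nonneg. intros n. apply Rmult_le_pos. apply l_nonneg. apply pow_le; lra. }
  assert (S1 : w ^ N * sum_f_R0 l N <= sum_f_R0 (fun k => l k * w ^ k) N).
  { rewrite scal_sum. apply sum_Rle. intros k Hk.
    apply Rmult_le_compat_l. apply l_nonneg.
    replace N with (k + (N - k))%nat by lia. rewrite pow_add.
    rewrite <- (Rmult_1_r (w ^ k)) at 2. apply Rmult_le_compat_l. apply pow_le; lra.
    rewrite <- (pow1 (N - k)). apply pow_incr. lra. }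
  lra.
Qed.

Lemma bernoulli z N : 0 <= z <= 1 -> 1 - INR N * z <= (1 - z) ^ N.
Proof.
  intros Hz. induction N.
  - simpl. lra.
  - rewrite S_INR. simpl. assert (H := pow_le (1 - z) N ltac:(lra)).
    assert (0 <= INR N) by apply pos_INR. nra.
Qed.

Lemma ln_le_m1 y : 0 < y -> ln y <= y - 1.
Proof.
  intros Hy. assert (H := exp_ineq1_le (ln y)). rewrite exp_ln in H by exact Hy. lra.
Qed.

Lemma ln1m_bound z : 0 < z <= 1/2 -> 0 <= - ln (1 - z) <= 2 * z.
Proof.
  intros Hz. rewrite <- ln_Rinv by lra.
  assert (H1 : 1 <= / (1 - z)).
  { apply Rmult_le_reg_r with (1 - z); [lra|]. rewrite Rinv_l; lra. }
  assert (H2 : / (1 - z) <= 1 + 2 * z).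
  { apply Rmult_le_reg_r with (1 - z); [lra|]. rewrite Rinv_l; nra. }
  split.
  - rewrite <- ln_1. apply ln_le; lra.
  - assert (H := ln_le_m1 (/ (1 - z)) ltac:(lra)). lra.
Qed.

Lemma lnz_bound z : 0 < z < 1 -> 0 <= - ln z <= 2 / sqrt z.
Proof.
  intros Hz.
  assert (Hs : 0 < sqrt z) by (apply sqrt_lt_R0; lra).
  assert (Hss := sqrt_sqrt z ltac:(lra)).
  assert (E : - ln z = 2 * ln (/ sqrt z)).
  { rewrite ln_Rinv by lra. rewrite <- Hss at 1. rewrite ln_mult by lra. ring. }
  assert (H1 : 1 <= / z).
  { apply Rmult_le_reg_r with z; [lra|]. rewrite Rinv_l; lra. }
  split.
  - rewrite <- ln_Rinv by lra. rewrite <- ln_1. apply ln_le; lra.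
  - rewrite E. assert (H := ln_le_m1 (/ sqrt z) ltac:(apply Rinv_0_lt_compat; lra)).
    unfold Rdiv. lra.
Qed.

Lemma lnprod_bound z : 0 < z <= 1/2 -> Rabs (ln z * ln (1 - z)) <= 4 * sqrt z.
Proof.
  intros Hz.
  assert (Hs : 0 < sqrt z) by (apply sqrt_lt_R0; lra).
  assert (Hss := sqrt_sqrt z ltac:(lra)).
  destruct (ln1m_bound z Hz) as [A1 A2].
  destruct (lnz_bound z ltac:(lra)) as [B1 B2].
  replace (ln z * ln (1 - z)) with ((- ln z) * (- ln (1 - z))) by ring.
  rewrite Rabs_right by (apply Rle_ge, Rmult_le_pos; lra).
  apply Rle_trans with ((2 / sqrt z) * (2 * z)).
  - apply Rmult_le_compat; lra.
  - rewrite <- Hss at 2. right. field. lra.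
Qed.

Lemma eps_zero x : (forall e, 0 < e -> Rabs x <= 2 * e) -> x = 0.
Proof.
  intros H. destruct (Req_dec x 0) as [|Hx]; [assumption|].
  assert (Hp : 0 < Rabs x) by (apply Rabs_pos_lt; exact Hx).
  assert (H1 := H (Rabs x / 4) ltac:(lra)). lra.
Qed.

Lemma refl_val (Z : R) : is_series l Z -> 2 * PSeries l (1/2) + ln 2 ^ 2 = Z.
Proof.
  intros HZ.
  set (V := 2 * PSeries l (1/2) + ln 2 ^ 2).
  enough (V - Z = 0) by lra.
  apply eps_zero. intros e He.
  destruct (proj1 (is_series_Reals l Z) HZ e He) as [N HN].
  assert (HN' := HN N (le_n N)). unfold Rdist in HN'.
  set (ZN := sum_f_R0 l N) in *.
  assert (HZN0 : 0 <= ZN) by (apply cond_pos_sum, l_nonneg).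
  assert (HZNZ : ZN <= Z).
  { assert (H1 := L_ge_partial Z 1 N HZ ltac:(lra)). rewrite pow1 in H1.
    assert (H2 := L_le_Z Z 1 HZ ltac:(lra)). fold ZN in H1. lra. }
  assert (HK : 0 <= INR N * Z) by (apply Rmult_le_pos; [apply pos_INR|lra]).
  set (s := Rmin (1/2) (e / (6 + INR N * Z))).
  assert (Hs0 : 0 < s) by (apply Rmin_glb_lt; [lra| apply Rdiv_lt_0_compat; lra]).
  assert (Hs1 : s <= 1/2) by apply Rmin_l.
  assert (Hs2 : (6 + INR N * Z) * s <= e).
  { assert (s <= e / (6 + INR N * Z)) by apply Rmin_r.
    apply Rmult_le_reg_r with (/ (6 + INR N * Z)). apply Rinv_0_lt_compat; lra.
    rewrite Rmult_comm, <- Rmult_assoc, Rinv_l by lra. unfold Rdiv in H. lra. }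
  set (z := s * s).
  assert (Hz0 : 0 < z) by (unfold z; nra).
  assert (Hzs : z <= s) by (unfold z; nra).
  assert (Hsq : sqrt z = s) by (unfold z; apply sqrt_square; lra).
  assert (HR := refl_const z ltac:(lra)). fold V in HR.
  destruct (L_small z ltac:(lra)) as [A1 A2].
  assert (B1 := L_le_Z Z (1 - z) HZ ltac:(lra)).
  assert (B2 := L_ge_partial Z (1 - z) N HZ ltac:(lra)). fold ZN in B2.
  assert (B3 := bernoulli z N ltac:(lra)).
  assert (B4 : (1 - INR N * z) * ZN <= (1 - z) ^ N * ZN) by (apply Rmult_le_compat_r; lra).
  assert (B5 : INR N * z * ZN <= INR N * s * Z).
  { apply Rmult_le_compat. apply Rmult_le_pos. apply pos_INR. lra. lra.
    apply Rmult_le_compat_l. apply pos_INR. lra. lra. }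
  assert (C := lnprod_bound z ltac:(lra)). rewrite Hsq in C.
  apply Rabs_def2 in HN'. 
  assert (C1 := Rle_abs (ln z * ln (1 - z))). assert (C2 := Rabs_maj2 (ln z * ln (1 - z))).
  apply Rabs_le. split.
  - rewrite <- HR. nra.
  - rewrite <- HR. nra.
Qed.

Lemma rint_plus (f g : R -> R) a b If Ig : is_RInt f a b If -> is_RInt g a b Ig ->
  is_RInt (fun y => f y + g y) a b (If + Ig).
Proof. intros H1 H2. exact (is_RInt_plus f g a b If Ig H1 H2). Qed.

Lemma rint_scal (f : R -> R) a b k If : is_RInt f a b If ->
  is_RInt (fun y => k * f y) a b (k * If).
Proof. intros H1. exact (is_RInt_scal f a b k If H1). Qed.

Lemma rint_ext (f g : R -> R) a b If : (forall x, Rmin a b < x < Rmax a b -> @eq R (f x) (g x)) ->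
  is_RInt f a b If -> is_RInt g a b If.
Proof. intros H1 H2. exact (is_RInt_ext f g a b If H1 H2). Qed.

Lemma rint_derive (F f : R -> R) a b : (forall x, Rmin a b <= x <= Rmax a b -> is_derive F x (f x)) ->
  (forall x, Rmin a b <= x <= Rmax a b -> continuous f x) ->
  is_RInt f a b (F b - F a).
Proof. intros H1 H2. exact (is_RInt_derive F f a b H1 H2). Qed.

Definition W (n : nat) : R := 4 ^ n / ((2 * INR n + 1) * a n).

Lemma wallis n : is_RInt (fun t => sin t ^ (2 * n + 1)) 0 (PI / 2) (W n).
Proof.
  induction n.
  - unfold W. rewrite a0. simpl.
    replace (1 / ((2 * 0 + 1) * 1)) with (- cos (PI/2) - - cos 0) by (rewrite cos_PI2, cos_0; field).
    apply (rint_ext (fun t => sin t)). intros; simpl; ring.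
    apply (rint_derive (fun t => - cos t) sin).
    + intros x _. auto_derive; auto. ring.
    + intros x _. apply (ex_derive_continuous (K:=R_AbsRing) (V:=R_NormedModule)). auto_derive; auto.
  - assert (Hm : (2 * S n + 1)%nat = S (S (2*n+1))) by lia. rewrite Hm.
    remember (2*n+1)%nat as m eqn:Em.
    assert (HmR : INR m = 2 * INR n + 1) by (rewrite Em, plus_INR, mult_INR; simpl; ring).
    set (F := fun t => - cos t * sin t ^ S m).
    set (df := fun t => (INR m + 2) * sin t ^ S (S m) - (INR m + 1) * sin t ^ m).
    assert (HF : is_RInt df 0 (PI/2) (F (PI/2) - F 0)).
    { apply rint_derive.
      - intros x _. unfold F, df. auto_derive; auto.
        change (match m with 0%nat => 1 | S _ => INR m + 1 end) with (INR (S m)). rewrite S_INR. rewrite <- !tech_pow_Rmult.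
        assert (Hc := sin2_cos2 x). unfold Rsqr in Hc.
        set (s := sin x ^ m).
        replace (- (1 * - sin x) * (sin x * s) + - cos x * (1 * cos x * ((INR m + 1) * s)))
          with (sin x * sin x * s - (cos x * cos x) * ((INR m + 1) * s)) by ring.
        replace (cos x * cos x) with (1 - sin x * sin x) by lra. ring.
      - intros x _. apply (ex_derive_continuous (K:=R_AbsRing) (V:=R_NormedModule)). unfold df. auto_derive; auto. }
    assert (HF0 : F (PI/2) - F 0 = 0) by (unfold F; rewrite cos_PI2, sin_0, cos_0; simpl; ring).
    rewrite HF0 in HF.
    assert (HS := rint_scal _ _ _ (INR m + 1) _ IHn).
    assert (Hsum := rint_plus _ _ _ _ _ _ HF HS).
    assert (Hfin := rint_scal _ _ _ (/ (INR m + 2)) _ Hsum).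
    assert (Hn := pos_INR n).
    replace (W (S n)) with (/ (INR m + 2) * (0 + (INR m + 1) * W n)).
    + eapply rint_ext; [|exact Hfin]. intros x _. cbv beta. unfold df. field. assert (Hm0 := pos_INR m). lra.
    + unfold W. rewrite a_Sn. rewrite S_INR. rewrite <- tech_pow_Rmult. rewrite HmR.
      assert (Ha := a_pos n). field. repeat split; lra.
Qed.

Lemma deriv_id x : is_derive (fun t : R => t) x 1.
Proof. auto_derive; auto. Qed.

Definition c (n : nat) : R := a n / (4 ^ n * (2 * INR n + 1)).

Lemma c_pos n : 0 < c n.
Proof.
  unfold c. apply Rdiv_lt_0_compat. apply a_pos.
  apply Rmult_lt_0_compat. apply pow_lt; lra. assert (H := pos_INR n). lra.
Qed.

Lemma c_b n : Rabs (c n) <= 1.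
Proof.
  rewrite Rabs_right by (apply Rle_ge, Rlt_le, c_pos).
  unfold c. assert (H1 := a_le n). assert (H2 := pos_INR n). assert (H3 : 0 < 4 ^ n) by (apply pow_lt; lra).
  apply Rmult_le_reg_r with (4 ^ n * (2 * INR n + 1)). nra.
  unfold Rdiv. rewrite Rmult_assoc, Rinv_l by nra. nra.
Qed.

Lemma Bq_closed w : 0 <= w < 1 -> PSeries (fun n => a n / 4 ^ n) w * sqrt (1 - w) = 1.
Proof.
  intros Hw.
  replace (PSeries (fun n => a n / 4 ^ n) w) with (PSeries a (w / 4)).
  - replace (1 - w) with (1 - 4 * (w / 4)) by field. apply B_closed.
    rewrite Rabs_right; lra.
  - unfold PSeries. apply Series_ext. intros n. unfold Rdiv. rewrite Rpow_mult_distr, pow_inv. ring.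
Qed.

Lemma A_id w : Rabs w < 1 ->
  PSeries c w + 2 * w * PSeries (PS_derive c) w = PSeries (fun n => a n / 4 ^ n) w.
Proof.
  intros Hw.
  rewrite (PS_lin3 (fun n => a n / 4 ^ n) c (PS_incr_1 (PS_derive c)) c 1 2 0 w).
  - rewrite PSeries_incr_1. ring.
  - intros n. rewrite incr_derive. unfold c. assert (H3 : 0 < 4 ^ n) by (apply pow_lt; lra).
    assert (H2 := pos_INR n). field. lra.
  - apply CV_radius_inside, r1; [apply c_b|exact Hw].
  - apply CV_radius_inside. rewrite CV_radius_incr_1, CV_radius_derive. apply r1; [apply c_b|exact Hw].
  - apply CV_radius_inside, r1; [apply c_b|exact Hw].
Qed.

Lemma D_id t : - (PI / 2) < t < PI / 2 -> sin t * PSeries c (sin t ^ 2) = t.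
Proof.
  intros Ht.
  set (h := fun t => sin t * PSeries c (sin t ^ 2) - t).
  assert (Hd : forall t, - (PI / 2) < t < PI / 2 -> is_derive h t 0).
  { intros x Hx.
    assert (Hc : 0 < cos x) by (apply cos_gt_0; lra).
    assert (Hsc := sin2_cos2 x). unfold Rsqr in Hsc.
    assert (Hw : 0 <= sin x ^ 2 < 1) by (split; [apply pow2_ge_0| nra]).
    assert (Hw' : Rabs (sin x ^ 2) < 1) by (rewrite Rabs_right; lra).
    eapply deriv_eq. unfold h.
    apply (deriv_minus (fun t => sin t * PSeries c (sin t ^ 2)) (fun t => t)).
    apply deriv_mul.
    - apply is_derive_sin.
    - apply (deriv_comp (PSeries c) (fun t => sin t ^ 2)).
      + apply is_derive_PSeries. apply r1; [apply c_b|exact Hw'].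
      + instantiate (1 := 2 * sin x * cos x). auto_derive; auto. ring.
    - apply deriv_id.
    - cbv beta.
      replace (cos x * PSeries c (sin x ^ 2) + sin x * (PSeries (PS_derive c) (sin x ^ 2) * (2 * sin x * cos x)) - 1)
        with (cos x * (PSeries c (sin x ^ 2) + 2 * (sin x ^ 2) * PSeries (PS_derive c) (sin x ^ 2)) - 1) by ring.
      rewrite A_id by exact Hw'.
      assert (Hq := Bq_closed (sin x ^ 2) Hw).
      replace (1 - sin x ^ 2) with (cos x ^ 2) in Hq by (simpl; lra).
      rewrite sqrt_pow2 in Hq by lra.
      rewrite Rmult_comm, Hq. ring. }
  assert (E := const_on h (- (PI/2)) (PI/2) Hd t 0 Ht ltac:(assert (H := PI_RGT_0); lra)).
  unfold h in E. rewrite sin_0 in E. lra.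
Qed.

Definition e (t : R) (n : nat) : R := c n * sin t ^ (2 * n + 1).

Lemma e_series t : 0 < t < PI / 2 -> is_series (e t) t.
Proof.
  intros Ht.
  assert (Hc : 0 < cos t) by (apply cos_gt_0; lra).
  assert (Hsc := sin2_cos2 t). unfold Rsqr in Hsc.
  assert (Hw' : Rabs (sin t ^ 2) < 1) by (rewrite Rabs_right; [nra| apply Rle_ge, pow2_ge_0]).
  assert (H := PSeries_correct c _ (CV_radius_inside c _ (r1 c _ c_b Hw'))).
  apply is_pseries_R in H.
  assert (H2 := is_series_scal_l (sin t) _ _ H).
  rewrite <- (D_id t) at 2 by lra.
  apply is_series_ext with (fun n => scal (sin t) (c n * (sin t ^ 2) ^ n)); [|exact H2].
  intros n. unfold e. change (@eq R (sin t * (c n * (sin t ^ 2) ^ n)) (c n * sin t ^ (2 * n + 1))). rewrite <- pow_mult, pow_add. ring.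
Qed.

Lemma e_nonneg t n : 0 <= t <= PI / 2 -> 0 <= e t n.
Proof.
  intros Ht. unfold e. apply Rmult_le_pos. apply Rlt_le, c_pos. apply pow_le.
  destruct (Req_dec t 0) as [->|H0]. rewrite sin_0; lra.
  destruct (Req_dec t (PI/2)) as [->|H1]. rewrite sin_PI2; lra.
  apply Rlt_le, sin_gt_0; lra.
Qed.

Lemma partial_le (u : nat -> R) L N : is_series u L -> (forall n, 0 <= u n) -> sum_f_R0 u N <= L.
Proof.
  intros H Hp. rewrite <- (is_series_unique _ _ H).
  rewrite (Series_incr_n u (S N)) by (lia || (eexists; exact H)). simpl pred.
  assert (0 <= Series (fun k => u (S N + k)%nat)) by (apply Series_nonneg; intros; apply Hp).
  lra.
Qed.

Lemma tail_le (u v : nat -> R) L M N : is_series u L -> is_series v M ->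
  (forall n, 0 <= u n <= v n) -> L - sum_f_R0 u N <= M - sum_f_R0 v N.
Proof.
  intros Hu Hv Hp. rewrite <- (is_series_unique _ _ Hu), <- (is_series_unique _ _ Hv).
  rewrite (Series_incr_n u (S N)) by (lia || (eexists; exact Hu)).
  rewrite (Series_incr_n v (S N)) by (lia || (eexists; exact Hv)). simpl pred.
  assert (Series (fun k => u (S N + k)%nat) <= Series (fun k => v (S N + k)%nat)).
  { apply Series_le. intros; apply Hp. apply (ex_series_incr_n v (S N)). eexists; exact Hv. }
  lra.
Qed.

Lemma PN_ex_derive N x : ex_derive (fun t => sum_f_R0 (e t) N) x.
Proof.
  induction N.
  - simpl. unfold e. auto_derive. auto.
  - simpl. apply (ex_derive_plus (fun t => sum_f_R0 (e t) N) (fun t => e t (S N))). exact IHN.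
    unfold e. auto_derive. auto.
Qed.

Lemma SN_le N : sum_f_R0 c N <= PI / 2.
Proof.
  assert (Hpi := PI_RGT_0).
  set (g := fun t => sum_f_R0 (e t) N).
  assert (Hg1 : g (PI/2) = sum_f_R0 c N).
  { unfold g. apply sum_eq. intros i _. unfold e. rewrite sin_PI2, pow1. ring. }
  assert (Hg2 : forall t, 0 < t < PI/2 -> g t <= t).
  { intros t Ht. apply partial_le. apply e_series; exact Ht. intros; apply e_nonneg; lra. }
  assert (Hcont : continuity_pt g (PI/2)).
  { apply continuity_pt_filterlim. apply (ex_derive_continuous (K:=R_AbsRing) (V:=R_NormedModule)). apply PN_ex_derive. }
  destruct (Rle_dec (sum_f_R0 c N) (PI/2)) as [Hle|Hgt]; [exact Hle|exfalso].
  apply Rnot_le_lt in Hgt.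
  unfold continuity_pt, continue_in, limit1_in, limit_in in Hcont.
  destruct (Hcont (sum_f_R0 c N - PI/2) ltac:(lra)) as [d [Hd Hx]].
  set (t := PI/2 - Rmin d (PI/2) / 2).
  assert (Hm1 : 0 < Rmin d (PI/2)) by (apply Rmin_glb_lt; lra).
  assert (Hm2 : Rmin d (PI/2) <= d) by apply Rmin_l.
  assert (Hm3 : Rmin d (PI/2) <= PI/2) by apply Rmin_r.
  assert (Ht : 0 < t < PI/2) by (unfold t; lra).
  assert (H1 := Hx t). simpl in H1. unfold R_dist in H1.
  assert (H2 : Rabs (g t - g (PI / 2)) < sum_f_R0 c N - PI / 2).
  { apply H1. split. unfold D_x, no_cond. split; [auto| unfold t; lra].
    rewrite Rabs_left by (unfold t; lra). unfold t; lra. }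
  rewrite Hg1 in H2. apply Rabs_def2 in H2. assert (H3 := Hg2 t Ht). lra.
Qed.

Lemma c_series : exists S, is_series c S.
Proof.
  destruct (growing_cv (sum_f_R0 c)) as [S HS].
  - intros n. simpl. assert (H := c_pos (S n)). lra.
  - exists (PI/2). intros x [i ->]. apply SN_le.
  - exists S. apply is_series_Reals. exact HS.
Qed.

Lemma cW n : c n * W n = / (2 * INR n + 1) ^ 2.
Proof.
  unfold c, W. assert (H1 := a_pos n). assert (H2 : 0 < 4 ^ n) by (apply pow_lt; lra).
  assert (H3 := pos_INR n). field. repeat split; lra.
Qed.

Lemma PN_int N : is_RInt (fun t => sum_f_R0 (e t) N) 0 (PI/2) (sum_f_R0 (fun n => / (2 * INR n + 1) ^ 2) N).
Proof.
  induction N.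
  - change (is_RInt (fun t => e t 0) 0 (PI/2) (/ (2 * INR 0 + 1) ^ 2)). rewrite <- cW. unfold e. apply rint_scal. apply wallis.
  - change (is_RInt (fun t => sum_f_R0 (e t) N + e t (S N)) 0 (PI/2)
      (sum_f_R0 (fun n => / (2 * INR n + 1) ^ 2) N + / (2 * INR (S N) + 1) ^ 2)). rewrite <- cW. apply rint_plus. exact IHN. unfold e. apply rint_scal. apply wallis.
Qed.

Lemma rint_lin (k : R) : is_RInt (fun t => t - k) 0 (PI/2) (PI^2/8 - k * (PI/2)).
Proof.
  replace (PI^2/8 - k * (PI/2)) with ((PI/2)^2/2 - k * (PI/2) - (0^2/2 - k * 0)) by field.
  apply (rint_derive (fun t => t^2/2 - k * t) (fun t => t - k)).
  - intros x _. auto_derive; auto. match goal with |- ?A = ?B => change (@eq R A B) end. field.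
  - intros x _. apply (ex_derive_continuous (K:=R_AbsRing) (V:=R_NormedModule)). auto_derive; auto.
Qed.

Lemma odd_series : is_series (fun n => / (2 * INR n + 1) ^ 2) (PI ^ 2 / 8).
Proof.
  destruct c_series as [S HS].
  assert (Hpi := PI_RGT_0).
  assert (Up : forall N, sum_f_R0 (fun n => / (2 * INR n + 1) ^ 2) N <= PI ^ 2 / 8).
  { intros N. replace (PI ^ 2 / 8) with (PI^2/8 - 0 * (PI/2)) by ring.
    apply (is_RInt_le (fun t => sum_f_R0 (e t) N) (fun t => t - 0) 0 (PI/2)). lra.
    apply PN_int. apply rint_lin.
    intros t Ht. replace (t - 0) with t by ring. apply partial_le. apply e_series; exact Ht.
    intros; apply e_nonneg; lra. }
  assert (Lo : forall N, PI ^ 2 / 8 - (S - sum_f_R0 c N) * (PI/2) <= sum_f_R0 (fun n => / (2 * INR n + 1) ^ 2) N).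
  { intros N.
    apply (is_RInt_le (fun t => t - (S - sum_f_R0 c N)) (fun t => sum_f_R0 (e t) N) 0 (PI/2)). lra.
    apply rint_lin. apply PN_int.
    intros t Ht. assert (H := tail_le (e t) c t S N (e_series t Ht) HS).
    enough (t - sum_f_R0 (e t) N <= S - sum_f_R0 c N) by lra. apply H.
    intros n. split. apply e_nonneg; lra. unfold e.
    rewrite <- (Rmult_1_r (c n)) at 2. apply Rmult_le_compat_l. apply Rlt_le, c_pos.
    rewrite <- (pow1 (2 * n + 1)). apply pow_incr. split. apply Rlt_le, sin_gt_0; lra. apply SIN_bound. }
  apply is_series_Reals in HS.
  apply is_series_Reals. intros eps Heps.
  destruct (HS (eps / (PI/2))) as [N0 HN0]. apply Rdiv_lt_0_compat; lra.
  exists N0. intros n Hn. assert (H1 := HN0 n Hn). unfold Rdist in *.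
  assert (H2 := Up n). assert (H3 := Lo n).
  apply Rabs_def2 in H1.
  rewrite Rabs_left1 by lra.
  assert (H4 : (S - sum_f_R0 c n) * (PI / 2) < eps).
  { apply Rmult_lt_reg_r with (/ (PI/2)). apply Rinv_0_lt_compat; lra.
    rewrite Rmult_assoc, Rinv_r by lra. unfold Rdiv in H1. lra. }
  lra.
Qed.

Definition O (N : nat) : R := sum_f_R0 (fun n => / (2 * INR n + 1) ^ 2) N.

Lemma split_sum N : sum_f_R0 l (2 * N + 1) = O N + sum_f_R0 l N / 4.
Proof.
  induction N.
  - simpl. unfold O. simpl. field.
  - replace (2 * S N + 1)%nat with (S (S (2 * N + 1))) by lia.
    rewrite !tech5. rewrite IHN. unfold O. rewrite tech5.
    change (l (S (2 * N + 1))) with (/ INR (S (2 * N + 1)) ^ 2).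
    change (l (S (S (2 * N + 1)))) with (/ INR (S (S (2 * N + 1))) ^ 2).
    change (l (S N)) with (/ INR (S N) ^ 2).
    rewrite !S_INR, !plus_INR, !mult_INR. simpl INR.
    assert (H := pos_INR N). field. repeat split; lra.
Qed.

Lemma Zs_mono n k : sum_f_R0 l n <= sum_f_R0 l (n + k).
Proof.
  induction k. rewrite Nat.add_0_r. lra.
  rewrite Nat.add_succ_r, tech5. assert (H := l_nonneg (S (n + k))). lra.
Qed.

Lemma zeta2 : is_series l (PI ^ 2 / 6).
Proof.
  assert (HO := odd_series). apply is_series_Reals in HO.
  assert (Hb : forall n, sum_f_R0 l n <= PI ^ 2 / 6).
  { intros n.
    assert (H1 := Zs_mono n (S n)). replace (n + S n)%nat with (2 * n + 1)%nat in H1 by lia.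
    assert (H2 := Zs_mono n (S n)). replace (n + S n)%nat with (2 * n + 1)%nat in H2 by lia.
    assert (H3 := split_sum n).
    assert (H4 : O n <= PI ^ 2 / 8).
    { unfold O. apply partial_le. apply is_series_Reals; exact HO.
      intros k. apply Rlt_le, Rinv_0_lt_compat, pow_lt. assert (H := pos_INR k). lra. }
    lra. }
  destruct (growing_cv (sum_f_R0 l)) as [Zl HZ].
  - intros n. rewrite tech5. assert (H := l_nonneg (S n)). lra.
  - exists (PI ^ 2 / 6). intros x [i ->]. apply Hb.
  - assert (E : Zl = PI ^ 2 / 6).
    { enough (Zl - PI ^ 2 / 6 = 0) by lra.
      apply eps_zero. intros eps Heps.
      destruct (HZ (eps / 2) ltac:(lra)) as [N1 HN1].
      destruct (HO (eps / 2) ltac:(lra)) as [N2 HN2].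
      set (N := (N1 + N2)%nat).
      assert (A1 := HN1 N ltac:(unfold N; lia)).
      assert (A2 := HN1 (2 * N + 1)%nat ltac:(unfold N; lia)).
      assert (A3 := HN2 N ltac:(unfold N; lia)).
      unfold Rdist in *. rewrite split_sum in A2. fold (O N) in A3.
      apply Rabs_def2 in A1. apply Rabs_def2 in A2. apply Rabs_def2 in A3.
      apply Rabs_le. lra. }
    rewrite <- E. apply is_series_Reals. exact HZ.
Qed.

Lemma L_half : 2 * PSeries l (1/2) = PI ^ 2 / 6 - ln 2 ^ 2.
Proof. assert (H := refl_val _ zeta2). lra. Qed.


Theorem mainTheorem9 :
  is_series (fun m : nat => term9 (S m)) (PI ^ 2 / 6 - (ln 2) ^ 2).
Proof.
  rewrite <- L_half. apply sum_main.
Qed.
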